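(* In the setting below, assume $\|\nabla f_i(x)\|\le G_i$ for all $x$ and $i$. Then for any $k\in[K]$, any permutation $\sigma_k$ and any $z\in\mathbb R^d$, $$\frac1n\sum_{i=1}^n\Big(B_{f_{\sigma_k^i}}(x_{k+1},x_k^i)-B_{f_{\sigma_k^i}}(z,x_k^i)\Big)\le2\bar G\|x_{k+1}-x_k\|+\bar G^2n\eta_k.$$
   Context: Setting. Let $n,d\in\mathbb N$, let $f_1,\dots,f_n:\mathbb R^d\to\mathbb R$ be convex, let $\psi:\mathbb R^d\to\mathbb R\cup\{+\infty\}$ be proper, closed and convex. For a convex function $g$, $\nabla g(x)$ denotes an element of $\partial g(x)$ (for each $f_i$ a fixed selection of subgradients, the same one used in the algorithm and in the Bregman divergences), and $B_g(x,y)=g(x)-g(y)-\langle\nabla g(y),x-y\rangle$. Proximal shuffling gradient method: given $x_1\in\mathrm{dom}\,\psi$, a number of epochs $K\ge2$ and stepsizes $\eta_k>0$, for $k=1,\dots,K$: choose a permutation $\sigma_k=(\sigma_k^1,\dots,\sigma_k^n)$ of $[n]=\{1,\dots,n\}$; set $x_k^1=x_k$ and $x_k^{i+1}=x_k^i-\eta_k\nabla f_{\sigma_k^i}(x_k^i)$ for $i=1,\dots,n$; set $x_{k+1}=\arg\min_{x\in\mathbb R^d}\{n\psi(x)+\frac{1}{2\eta_k}\|x-x_k^{n+1}\|^2\}$. Lipschitz condition: constants $G_i>0$ with $\|\nabla f_i(x)\|\le G_i$ for all $x\in\mathbb R^d$, $i\in[n]$ (for every subgradient); $\bar G=\frac1n\sum_{i=1}^nG_i$.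 *)

(* Defs.v *)
From HB Require Import structures.
From mathcomp Require Import all_boot all_order all_algebra.
From mathcomp Require Import all_classical all_reals all_analysis.
From mathcomp Require Import fingroup perm.
Set Implicit Arguments. Unset Strict Implicit. Unset Printing Implicit Defensive.
Import Order.TTheory GRing.Theory Num.Theory.
Import numFieldNormedType.Exports.
Local Open Scope classical_set_scope.
Local Open Scope ring_scope.

Definition dotv (R : realType) (d : nat) (u v : 'rV[R]_d) : R :=
  \sum_(j < d) u ord0 j * v ord0 j.

Definition enorm (R : realType) (d : nat) (u : 'rV[R]_d) : R :=
  Num.sqrt (dotv u u).

Definition convex_fun (R : realType) (d : nat) (f : 'rV[R]_d -> R) : Prop :=
  forall (x y : 'rV[R]_d) (t : R), 0 <= t -> t <= 1 ->
    f ((1 - t) *: x + t *: y) <= (1 - t) * f x + t * f y.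

Definition is_subgrad (R : realType) (d : nat) (f : 'rV[R]_d -> R)
    (x v : 'rV[R]_d) : Prop :=
  forall y, f x + dotv v (y - x) <= f y.

(* Bregman divergence B_f(x,y) = f x - f y - <grad f y, x - y>,
   with gradf a fixed selection of subgradients. *)
Definition bregman (R : realType) (d : nat) (f : 'rV[R]_d -> R)
    (gradf : 'rV[R]_d -> 'rV[R]_d) (x y : 'rV[R]_d) : R :=
  f x - f y - dotv (gradf y) (x - y).

Definition proper_fun (R : realType) (d : nat) (psi : 'rV[R]_d -> \bar R) : Prop :=
  (forall x, psi x != -oo%E) /\ (exists x, (psi x < +oo)%E).

Definition closed_fun (R : realType) (d : nat) (psi : 'rV[R]_d -> \bar R) : Prop :=
  closed [set p : 'rV[R]_d * R | (psi p.1 <= p.2%:E)%E].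

Definition convex_efun (R : realType) (d : nat) (psi : 'rV[R]_d -> \bar R) : Prop :=
  forall (x y : 'rV[R]_d) (t : R), 0 <= t -> t <= 1 ->
    (psi ((1 - t) *: x + t *: y)%R <= (1 - t)%:E * psi x + t%:E * psi y)%E.

Definition prox_obj (R : realType) (d n : nat) (psi : 'rV[R]_d -> \bar R)
    (eta : R) (w y : 'rV[R]_d) : \bar R :=
  ((n%:R)%:E * psi y + ((2 * eta)^-1 * enorm (y - w) ^+ 2)%:E)%E.

(* Main.v *)
Require Import Defs.
From HB Require Import structures.
From mathcomp Require Import all_boot all_order all_algebra.
From mathcomp Require Import all_classical all_reals all_analysis.
From mathcomp Require Import fingroup perm.
From mathcomp Require Import ring lra.
Import Order.TTheory GRing.Theory Num.Theory.
Local Open Scope ring_scope.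

Section Aux.
Local Set Implicit Arguments.
Variables (R : realType) (d : nat).
Implicit Types u v w : 'rV[R]_d.

Lemma dotvC u v : dotv u v = dotv v u.
Proof. by rewrite /dotv; apply: eq_bigr => j _; rewrite mulrC. Qed.
Lemma dotvDl u v w : dotv (u + v) w = dotv u w + dotv v w.
Proof. by rewrite /dotv -big_split; apply: eq_bigr => j _; rewrite mxE mulrDl. Qed.
Lemma dotvZl c u w : dotv (c *: u) w = c * dotv u w.
Proof. by rewrite /dotv mulr_sumr; apply: eq_bigr => j _; rewrite mxE mulrA. Qed.
Lemma dotvNl u w : dotv (- u) w = - dotv u w.
Proof. by rewrite -scaleN1r dotvZl mulN1r. Qed.
Lemma dotvBl u v w : dotv (u - v) w = dotv u w - dotv v w.
Proof. by rewrite dotvDl dotvNl. Qed.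
Lemma dotvDr u v w : dotv w (u + v) = dotv w u + dotv w v.
Proof. by rewrite dotvC dotvDl !(dotvC w). Qed.
Lemma dotvZr c u w : dotv w (c *: u) = c * dotv w u.
Proof. by rewrite dotvC dotvZl dotvC. Qed.
Lemma dotvNr u w : dotv w (- u) = - dotv w u.
Proof. by rewrite dotvC dotvNl dotvC. Qed.
Lemma dotvBr u v w : dotv w (u - v) = dotv w u - dotv w v.
Proof. by rewrite dotvDr dotvNr. Qed.
Lemma dotv_ge0 u : 0 <= dotv u u.
Proof. by apply: sumr_ge0 => j _; rewrite -expr2 sqr_ge0. Qed.
Lemma enorm_ge0 u : 0 <= enorm u.
Proof. exact: sqrtr_ge0. Qed.
Lemma enorm_sqr u : enorm u ^+ 2 = dotv u u.
Proof. by rewrite sqr_sqrtr // dotv_ge0. Qed.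

Lemma dotv0 u v : enorm u = 0 -> dotv u v = 0.
Proof.
move=> h; have h2 : dotv u u = 0 by rewrite -enorm_sqr h expr0n.
rewrite /dotv big1 // => j _.
have hj : u ord0 j * u ord0 j = 0.
  apply: (@psumr_eq0P R _ xpredT (fun j => u ord0 j * u ord0 j)) => // i _.
  by rewrite -expr2 sqr_ge0.
by move/eqP: hj; rewrite mulf_eq0 orbb => /eqP ->; rewrite mul0r.
Qed.

Lemma CS u v : dotv u v <= enorm u * enorm v.
Proof.
set a := enorm u; set b := enorm v.
have ha : 0 <= a by apply: enorm_ge0.
have hb : 0 <= b by apply: enorm_ge0.
have ea : dotv u u = a ^+ 2 by rewrite enorm_sqr.
have eb : dotv v v = b ^+ 2 by rewrite enorm_sqr.
have H : 0 <= dotv (b *: u - a *: v) (b *: u - a *: v) by apply: dotv_ge0.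
rewrite !dotvBl !dotvBr !dotvZl !dotvZr ea eb (dotvC v u) in H.
have [a0|] := eqVneq a 0; first by rewrite dotv0 // a0 mul0r.
have [b0|] := eqVneq b 0; first by rewrite dotvC dotv0 // b0 mulr0.
move=> bn an.
have pa : 0 < a by rewrite lt_def an ha.
have pb : 0 < b by rewrite lt_def bn hb.
have pab : 0 < a * b by apply: mulr_gt0.
nra.
Qed.

Lemma enormN u : enorm (- u) = enorm u.
Proof. by rewrite /enorm dotvNl dotvNr opprK. Qed.

Lemma CS' u v : - (enorm u * enorm v) <= dotv u v.
Proof. by rewrite lerNl -dotvNl -(enormN u) CS. Qed.

Lemma enormD u v : enorm (u + v) <= enorm u + enorm v.
Proof.
have h : enorm (u + v) ^+ 2 <= (enorm u + enorm v) ^+ 2.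
  rewrite enorm_sqr !dotvDl !dotvDr (dotvC v u) sqrrD -!enorm_sqr.
  have := CS u v; lra.
have := enorm_ge0 (u + v); have := enorm_ge0 u; have := enorm_ge0 v; nra.
Qed.

Lemma enormZ c u : 0 <= c -> enorm (c *: u) = c * enorm u.
Proof.
move=> hc; rewrite /enorm dotvZl dotvZr mulrA sqrtrM; last by nra.
by rewrite -expr2 sqrtr_sqr ger0_norm.
Qed.

Lemma enormB u v : enorm (u - v) = enorm (v - u).
Proof. by rewrite -enormN opprB. Qed.
End Aux.

Theorem mainTheorem8 (R : realType) (n d : nat)
    (f : 'I_n -> 'rV[R]_d -> R) (gf : 'I_n -> 'rV[R]_d -> 'rV[R]_d)
    (psi : 'rV[R]_d -> \bar R) (G : 'I_n -> R)
    (K : nat) (eta : nat -> R) (sigma : nat -> {perm 'I_n})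
    (x : nat -> 'rV[R]_d) (xin : nat -> nat -> 'rV[R]_d) :
  (forall j, convex_fun (f j)) ->
  (forall j y, is_subgrad (f j) y (gf j y)) ->
  proper_fun psi -> closed_fun psi -> convex_efun psi ->
  (forall j, 0 < G j) ->
  (forall j y v, is_subgrad (f j) y v -> enorm v <= G j) ->
  (2 <= K)%N ->
  (forall k, (1 <= k <= K)%N -> 0 < eta k) ->
  (psi (x 1%N) < +oo)%E ->
  (forall k, (1 <= k <= K)%N -> xin k 1%N = x k) ->
  (forall k, (1 <= k <= K)%N -> forall i : 'I_n,
     xin k i.+2 = xin k i.+1 - eta k *: gf (sigma k i) (xin k i.+1)) ->
  (forall k, (1 <= k <= K)%N -> forall y : 'rV[R]_d,
     (prox_obj n psi (eta k) (xin k n.+1) (x k.+1)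
        <= prox_obj n psi (eta k) (xin k n.+1) y)%E) ->
  forall k, (1 <= k <= K)%N -> forall z : 'rV[R]_d,
    let Gbar := (n%:R)^-1 * \sum_(j < n) G j in
    (n%:R)^-1 * \sum_(i < n)
        (bregman (f (sigma k i)) (gf (sigma k i)) (x k.+1) (xin k i.+1)
         - bregman (f (sigma k i)) (gf (sigma k i)) z (xin k i.+1))
      <= 2 * Gbar * enorm (x k.+1 - x k) + Gbar ^+ 2 * n%:R * eta k.

Proof.
move: d f gf psi G K eta sigma x xin.
case: n => [|N] d f gf psi G K eta sigma x xin hconv hsub hprop hclo hcvx hG hLip hK heta hx1 hxin1 hrec hprox k hk z; cbv zeta.
  by rewrite !big_ord0 /= !(mulr0, mul0r, addr0).
set X := x k.+1; set D := enorm (X - x k); set e := eta k.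
set a := fun i : nat => G (sigma k (inord i)).
have ha : forall i, 0 < a i by move=> i; apply: hG.
have he : 0 < e by apply: heta.
have C2 : forall m, (m <= N.+1)%N -> enorm (X - xin k m.+1) <= D + e * \sum_(j < m) a j.
  elim=> [_|m IH hm].
    by rewrite big_ord0 mulr0 addr0 hxin1.
  have hm' : (m < N.+1)%N by [].
  have := hrec k hk (Ordinal hm'); rewrite /= => ->.
  rewrite big_ord_recr /= opprB addrCA [_ + (X - _)]addrC.
  set i := Ordinal hm'.
  have ai : a m = G (sigma k i).
    by rewrite /a; congr (G (sigma k _)); apply: val_inj; rewrite /= inordK.
  apply: le_trans; first exact: enormD.
  rewrite enormZ; last exact: ltW.
  have g1 := hLip _ _ _ (hsub (sigma k i) (xin k m.+1)).
  have := IH (ltnW hm).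
  rewrite mulrDr ai addrA.
  move=> H1; apply: lerD => //.
  by apply: ler_wpM2l => //; exact: ltW.
have C1 : forall i : 'I_N.+1,
  bregman (f (sigma k i)) (gf (sigma k i)) X (xin k i.+1)
    - bregman (f (sigma k i)) (gf (sigma k i)) z (xin k i.+1)
  <= 2 * a i * enorm (X - xin k i.+1).
  move=> i; rewrite /bregman.
  have ai : a i = G (sigma k i) by rewrite /a inord_val.
  set y := xin k i.+1; set F := f (sigma k i); set g := gf (sigma k i) y.
  set h := gf (sigma k i) X.
  have s1 := hsub (sigma k i) y z.
  have s2 := hsub (sigma k i) X y.
  rewrite -/F -/g in s1; rewrite -/F -/h in s2.
  have L1 := hLip _ _ _ (hsub (sigma k i) y); rewrite -/g in L1.
  have L2 := hLip _ _ _ (hsub (sigma k i) X); rewrite -/h in L2.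
  have c1 := @CS' _ _ h (y - X); rewrite enormB in c1.
  have c2 := @CS' _ _ g (X - y).
  have E0 := @enorm_ge0 _ _ (X - y).
  have p1 : enorm h * enorm (X - y) <= G (sigma k i) * enorm (X - y) by apply: ler_wpM2r.
  have p2 : enorm g * enorm (X - y) <= G (sigma k i) * enorm (X - y) by apply: ler_wpM2r.
  rewrite ai; lra.
have Q : forall m, 2 * \sum_(i < m) (a i * \sum_(j < i) a j) <= (\sum_(i < m) a i) ^+ 2.
  elim=> [|m IH]; first by rewrite !big_ord0 mulr0 expr0n.
  rewrite !big_ord_recr /= mulrDr sqrrD.
  have := ha m; have := IH; set S := \sum_(i < m) a i.
  have : 0 <= S by apply: sumr_ge0 => i _; apply: ltW.
  nra.
have hA : \sum_(i < N.+1) a i = \sum_(j < N.+1) G j.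
  rewrite [RHS](reindex_inj (@perm_inj _ (sigma k))) /=.
  by apply: eq_bigr => i _; rewrite /a inord_val.
set A := \sum_(j < N.+1) G j in hA.
set T := \sum_(i < N.+1) (a i * \sum_(j < i) a j).
have QT : 2 * T <= A ^+ 2 by rewrite -hA; exact: Q.
have step : \sum_(i < N.+1)
    (bregman (f (sigma k i)) (gf (sigma k i)) X (xin k i.+1)
     - bregman (f (sigma k i)) (gf (sigma k i)) z (xin k i.+1))
  <= 2 * D * A + 2 * e * T.
  apply: (le_trans (ler_sum _ (fun i _ => C1 i))).
  apply: (@le_trans _ _ (\sum_(i < N.+1) (2 * a i * (D + e * \sum_(j < i) a j)))).
    apply: ler_sum => i _; apply: ler_wpM2l; first by have := ha i; lra.
    by apply: C2; apply: ltnW.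
  rewrite -hA /T mulr_sumr mulr_sumr -big_split /=.
  by apply: ler_sum => i _; rewrite /= le_eqVlt; apply/orP; left; apply/eqP; ring.
have cpos : 0 < (N.+1%:R : R)^-1 by rewrite invr_gt0 ltr0n.
have cN : (N.+1%:R : R)^-1 * N.+1%:R = 1 by rewrite mulVf // pnatr_eq0.
set c := (N.+1%:R : R)^-1 in cpos cN *.
have eq1 : 2 * (c * A) * D + (c * A) ^+ 2 * N.+1%:R * e
         = c * (2 * D * A + A ^+ 2 * e) + c * A ^+ 2 * e * (c * N.+1%:R - 1).
  by ring.
rewrite eq1 cN subrr mulr0 addr0; apply: ler_wpM2l; first exact: ltW.
apply: (le_trans step); nra.
Qed.
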